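(* Suppose $\frac1{\sqrt5}<a<\frac{\sqrt{105}-5}{10}$. Then for all integers $n\ge2$, \[ (3a-5a^3+2a^{2n+1})n+3a^{2n+1}-3a\ge0 \] and \[ (-3+30a^2-35a^4+8a^{2n+2})n^2+(3-35a^4+32a^{2n+2})n+30a^{2n+2}-30a^2\ge0. \] *)

(* Defs.v *)
From Stdlib Require Export Reals Lra Lia.

(* Main.v *)
Require Import Defs.
From Stdlib Require Import Reals.
Open Scope R_scope.

Theorem lemma4p4 (a : R) (n : nat)
  (ha1 : 1 / sqrt 5 < a) (ha2 : a < (sqrt 105 - 5) / 10) (hn : (2 <= n)%nat) :
  (3 * a - 5 * a ^ 3 + 2 * a ^ (2 * n + 1)) * INR n
    + 3 * a ^ (2 * n + 1) - 3 * a >= 0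
  /\
  (-3 + 30 * a ^ 2 - 35 * a ^ 4 + 8 * a ^ (2 * n + 2)) * INR n ^ 2
    + (3 - 35 * a ^ 4 + 32 * a ^ (2 * n + 2)) * INR n
    + 30 * a ^ (2 * n + 2) - 30 * a ^ 2 >= 0.
Proof.
  assert (h5 : 0 < sqrt 5) by (apply sqrt_lt_R0; lra).
  assert (h5s : sqrt 5 * sqrt 5 = 5) by (apply sqrt_sqrt; lra).
  assert (h105 : 0 <= sqrt 105) by apply sqrt_pos.
  assert (h105s : sqrt 105 * sqrt 105 = 105) by (apply sqrt_sqrt; lra).
  assert (hs : sqrt 105 < 10.25) by nra.
  assert (hinv : 0 < 1 / sqrt 5) by (apply Rdiv_lt_0_compat; lra).
  assert (ha0 : 0 < a) by lra.
  assert (has : 1 < a * sqrt 5).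
  { apply (Rmult_lt_compat_r (sqrt 5)) in ha1; auto.
    replace (1 / sqrt 5 * sqrt 5) with 1 in ha1 by (field; lra). lra. }
  assert (hb1 : 1/5 < a ^ 2) by nra.
  assert (hb2 : a ^ 2 < 0.2757) by nra.
  set (b := a ^ 2) in *.
  assert (hN : 2 <= INR n) by (apply (le_INR 2); exact hn).
  set (N := INR n) in *.
  assert (ht : 0 <= a ^ (2 * n)) by (rewrite pow_mult; apply pow_le; unfold b in *; nra).
  set (t := a ^ (2 * n)) in *.
  assert (e1 : a ^ (2 * n + 1) = a * t) by (unfold t; rewrite pow_add; ring).
  assert (e2 : a ^ (2 * n + 2) = b * t) by (unfold t, b; rewrite pow_add; ring).
  assert (e3 : a ^ 3 = a * b) by (unfold b; ring).
  assert (e4 : a ^ 4 = b * b) by (unfold b; ring).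
  rewrite e1, e2, e3, e4. split.
  { assert (hi : 0 <= (3 - 5*b) * N - 3 + t * (2 * N + 3)).
    { assert (0 <= (3 - 5*b) * (N - 2)) by nra.
      assert (0 <= t * (2 * N + 3)) by nra. nra. }
    assert (0 <= a * ((3 - 5*b) * N - 3 + t * (2 * N + 3))) by nra.
    nra. }
  { assert (hbt : 0 <= b * t) by nra.
    assert (hf2 : 0 < -6 + 90*b - 210*b*b) by nra.
    assert (hc : 0 < -3 + 30*b - 35*b*b) by nra.
    assert (hd : 0 < (-3 + 30*b - 35*b*b) * (N + 2) + 3 - 35*b*b) by nra.
    assert (0 <= (N - 2) * ((-3 + 30*b - 35*b*b) * (N + 2) + 3 - 35*b*b)) by nra.
    assert (0 <= b * t * (8 * N^2 + 32 * N + 30)) by nra.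
    nra. }
Qed.
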